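(* Let $F$ satisfy $2-\sqrt3\le F<2.4$, let $\varepsilon>0$, and consider $$P(X)=X^4-\varepsilon^2(1+F^2)X^2-2F\varepsilon X-1 .$$ Then there exists $\varepsilon_0>0$ (depending on $F$) such that for all $0<\varepsilon<\varepsilon_0$ the polynomial $P$ has exactly two real roots, a positive root $X_0^+$ and a negative root $X_0^-$, and they satisfy $$X_0^+-1\in(0,\varepsilon F),\qquad X_0^-+1\in(0,\varepsilon F).$$
   Context: This polynomial is the non-dimensional form of the dispersion relation $c^2(c^2k^2-f^2)=(c\hat f+\tilde g)^2$ for internal waves on the thermocline, via $X=c\sqrt{k/\tilde g}$, $\varepsilon=f/\sqrt{\tilde g k}$, $F=\hat f/f$, where $f=2\Omega\sin\phi$, $\hat f=2\Omega\cos\phi$ are the Coriolis parameters at latitude $\phi$, $k$ the wavenumber and $\tilde g$ the reduced gravity. The range $2-\sqrt3\le F<2.4$ corresponds to mid-latitudes (roughly $23^\circ26'16''$ to $75^\circ$), and the paper regards $\varepsilon$ as small (of order $10^{-2}$). *)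

(* Defs.v *)
From Stdlib Require Import Reals.
Open Scope R_scope.

Definition P (F eps X : R) : R :=
  X ^ 4 - eps ^ 2 * (1 + F ^ 2) * X ^ 2 - 2 * F * eps * X - 1.

(* Main.v *)
Require Import Defs.
From Stdlib Require Import Reals Lra Psatz.
Open Scope R_scope.

Lemma P_cont F e : continuity (fun X => P F e X).
Proof. unfold P; reg. Qed.

Lemma P_diff F e X Y : P F e X - P F e Y =
  (X - Y) * ((X + Y) * (X^2 + Y^2) - e^2 * (1 + F^2) * (X + Y) - 2 * F * e).
Proof. unfold P; ring. Qed.

Theorem mainTheorem2 (F : R) (hF1 : 2 - sqrt 3 <= F) (hF2 : F < 24 / 10) :
  exists eps0 : R, 0 < eps0 /\
    forall eps : R, 0 < eps < eps0 ->
      exists Xp Xm : R,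
        0 < Xp /\ Xm < 0 /\ P F eps Xp = 0 /\ P F eps Xm = 0 /\
        (forall X : R, P F eps X = 0 -> X = Xp \/ X = Xm) /\
        0 < Xp - 1 < eps * F /\
        0 < Xm + 1 < eps * F.
Proof.
  assert (hs : sqrt 3 < 174/100).
  { rewrite <- (sqrt_pow2 (174/100)) by lra. apply sqrt_lt_1_alt; lra. }
  assert (hF : 26/100 < F) by lra.
  exists (1/1000). split; [lra|]. intros e [he0 he1].
  set (K := e^2 * (1 + F^2)).
  assert (hK0 : 0 <= K) by (unfold K; nra).
  assert (hK : K <= 7/1000000).
  { unfold K. assert (e^2 <= 1/1000000) by nra. assert (1 + F^2 <= 7) by nra. nra. }
  set (d := e * F).
  assert (hd0 : 0 < d) by (unfold d; nra).
  assert (hd : d < 3/1000) by (unfold d; nra).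
  assert (hKd : K < d / 10).
  { unfold K, d. assert (e * (1 + F^2) < F/10) by nra. nra. }
  assert (E1 : P F e 1 < 0).
  { unfold P. fold d. replace (e^2 * (1+F^2)) with K by (unfold K; ring). nra. }
  assert (E2 : 0 < P F e (1 + d)).
  { unfold P. replace (e^2 * (1+F^2)) with K by (unfold K; ring).
    replace (2 * F * e * (1 + d)) with (2 * d * (1 + d)) by (unfold d; ring).
    assert (K * (1 + d)^2 < d / 5) by nra. nra. }
  assert (E3 : 0 < P F e (-1)).
  { unfold P. replace (e^2 * (1+F^2)) with K by (unfold K; ring).
    replace (2 * F * e * (-1)) with (- 2 * d) by (unfold d; ring). nra. }
  assert (E4 : P F e (-1 + d) < 0).
  { unfold P. replace (e^2 * (1+F^2)) with K by (unfold K; ring).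
    replace (2 * F * e * (-1 + d)) with (2 * d * (-1 + d)) by (unfold d; ring).
    assert (0 <= K * (-1 + d)^2) by (apply Rmult_le_pos; [lra| apply pow2_ge_0]).
    assert (d^2 < d) by nra. assert (d^4 <= d^2) by nra.
    replace ((-1 + d)^4) with (1 - 4*d + 6*d^2 - 4*d^3 + d^4) by ring.
    assert (0 <= d^3) by (apply pow_le; lra).
    nra. }
  destruct (IVT (fun X => P F e X) 1 (1 + d) (P_cont F e) ltac:(lra) E1 E2)
    as [Xp [HXp1 HXp2]].
  assert (Hc : continuity (fun X => - P F e X)).
  { apply continuity_opp. apply P_cont. }
  destruct (IVT (fun X => - P F e X) (-1) (-1 + d) Hc ltac:(lra)
             ltac:(lra) ltac:(lra)) as [Xm [HXm1 HXm2]].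
  simpl in HXp2, HXm2.
  assert (HXm2' : P F e Xm = 0) by lra.
  assert (Xp <> 1) by (intro; subst; lra).
  assert (Xp <> 1 + d) by (intro; subst; lra).
  assert (Xm <> -1) by (intro; subst; lra).
  assert (Xm <> -1 + d) by (intro; subst; lra).
  assert (Hbig : forall X, P F e X = 0 -> 1/2 <= X \/ X <= -1/2).
  { intros X HX. destruct (Rle_or_lt (1/2) X); [now left|].
    destruct (Rle_or_lt X (-1/2)); [now right|]. exfalso.
    unfold P in HX. replace (e^2 * (1+F^2)) with K in HX by (unfold K; ring).
    replace (2 * F * e * X) with (2 * d * X) in HX by (unfold d; ring).
    assert (X^2 <= 1/4) by nra. assert (X^4 <= 1/16) by nra.
    assert (-1/2 <= d * X <= 1/2) by nra. nra. }
  exists Xp, Xm. split; [lra|]. split; [lra|]. split; [exact HXp2|].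
  split; [exact HXm2'|]. split.
  - intros X HX. destruct (Hbig X HX) as [Hx|Hx].
    + left. destruct (Req_dec X Xp) as [|Hne]; [assumption|exfalso].
      pose proof (P_diff F e X Xp) as D. rewrite HX, HXp2 in D.
      replace (e^2 * (1+F^2)) with K in D by (unfold K; ring).
      replace (2 * F * e) with (2 * d) in D by (unfold d; ring).
      assert (Q : (X + Xp) * (X^2 + Xp^2) - K * (X + Xp) - 2 * d = 0).
      { apply Rmult_eq_reg_l with (X - Xp); [|lra]. lra. }
      assert (X^2 + Xp^2 - K >= 1/2) by nra.
      assert ((X + Xp) * (X^2 + Xp^2 - K) >= 1/2) by nra. nra.
    + right. destruct (Req_dec X Xm) as [|Hne]; [assumption|exfalso].
      pose proof (P_diff F e X Xm) as D. rewrite HX, HXm2' in D.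
      replace (e^2 * (1+F^2)) with K in D by (unfold K; ring).
      replace (2 * F * e) with (2 * d) in D by (unfold d; ring).
      assert (Q : (X + Xm) * (X^2 + Xm^2) - K * (X + Xm) - 2 * d = 0).
      { apply Rmult_eq_reg_l with (X - Xm); [|lra]. lra. }
      assert (X^2 + Xm^2 - K >= 1/2) by nra.
      assert ((X + Xm) * (X^2 + Xm^2 - K) <= -1/2) by nra. nra.
  - fold d. split; lra.
Qed.
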